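(* Let $L_1,L_2,L_3$ be self-adjoint complex $2\times2$ matrices and consider the stochastic differential equation for a complex process $w$, with $W=(1,w)$, \[ dw=\frac12\sum_{j=1}^3[w(L_j^*L_jW)_0-(L_j^*L_jW)_1]\,dt+\sum_{j=1}^3[w(L_jW)_0^2-(L_jW)_0(L_jW)_1]\,dt+\sum_{j=1}^3[(L_jW)_1-w(L_jW)_0]\,dY^j_t, \] where $Y$ is a standard three-dimensional Wiener process. Its diffusion operator (generator), written in coordinates $w=x+iy$, coincides up to a constant multiplier with the Laplace–Beltrami operator of the unit sphere in stereographic coordinates, $\frac14(1+x^2+y^2)^2\big(\frac{\partial^2}{\partial x^2}+\frac{\partial^2}{\partial y^2}\big)$, if and only if $L_1,L_2,L_3$ form a basis of the real space of traceless self-adjoint $2\times2$ matrices which is orthogonal in the sense that \[ \mathrm{tr}(L_jL_k)=2\big(l^{00}_jl^{00}_k+\mathrm{Re}\,l^{01}_j\,\mathrm{Re}\,l^{01}_k+\mathrm{Im}\,l^{01}_j\,\mathrm{Im}\,l^{01}_k\big)=a\,\delta_{jk} \] for some constant $a$, where $L_j=\begin{pmatrix} l^{00}_j & l^{01}_j\\ \overline{l^{01}_j} & l^{11}_j\end{pmatrix}$. For the Pauli matrices $a=2$, and the diffusion operator equals exactly the Laplace–Beltrami operator when $a=1$.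
   Context: For $v\in\mathbb{C}^2$, $(v)_0,(v)_1$ denote its coordinates. This SDE is the quantum filtering equation for a qubit with vanishing Hamiltonian and coupling operators $L_j$, in the projective coordinate $w=\chi_1/\chi_0$. The Pauli matrices are $\sigma_1=\begin{pmatrix}0&1\\1&0\end{pmatrix}$, $\sigma_2=\begin{pmatrix}0&-i\\ i&0\end{pmatrix}$, $\sigma_3=\begin{pmatrix}1&0\\0&-1\end{pmatrix}$. *)

(* Defs.v *)
From HB Require Import structures.
From mathcomp Require Import all_boot all_order all_algebra.
From mathcomp Require Import all_classical all_reals all_analysis.
From mathcomp Require Import complex.
Set Implicit Arguments. Unset Strict Implicit. Unset Printing Implicit Defensive.
Import Order.TTheory GRing.Theory Num.Theory.
Local Open Scope ring_scope.
Local Open Scope complex_scope.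

Section QF.
Variable R : realType.
Local Notation C := (R[i]).

Definition adjmx (A : 'M[C]_2) : 'M[C]_2 := (map_mx (@conjc R) A)^T.
Definition selfadj (A : 'M[C]_2) : Prop := adjmx A = A.
Definition traceless_sa (A : 'M[C]_2) : Prop := selfadj A /\ \tr A = 0.

Definition is_tsa_basis (L : 'I_3 -> 'M[C]_2) : Prop :=
  (forall j, traceless_sa (L j)) /\
  (forall M, traceless_sa M ->
     exists! c : 'I_3 -> R, M = \sum_(j < 3) ((c j)%:C *: L j)).

Definition orth_with (L : 'I_3 -> 'M[C]_2) (a : R) : Prop :=
  forall j k : 'I_3, \tr (L j *m L k) = (a * (j == k)%:R)%:C.

Definition Wv (w : C) : 'cV[C]_2 := \col_(i < 2) (if i == ord0 then 1 else w).
Definition co0 (v : 'cV[C]_2) : C := v ord0 ord0.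
Definition co1 (v : 'cV[C]_2) : C := v (lift ord0 ord0) ord0.

Definition drift (L : 'I_3 -> 'M[C]_2) (w : C) : C :=
  2^-1 * \sum_(j < 3) (w * co0 ((adjmx (L j) *m L j) *m Wv w)
                           - co1 ((adjmx (L j) *m L j) *m Wv w))
  + \sum_(j < 3) (w * (co0 (L j *m Wv w)) ^+ 2
                   - co0 (L j *m Wv w) * co1 (L j *m Wv w)).

Definition diffc (L : 'I_3 -> 'M[C]_2) (j : 'I_3) (w : C) : C :=
  co1 (L j *m Wv w) - w * co0 (L j *m Wv w).

Definition dX (f : R -> R -> R) x y : R := derive1 (fun s => f s y) x.
Definition dY (f : R -> R -> R) x y : R := derive1 (fun t => f x t) y.
Definition dXX (f : R -> R -> R) x y : R := derive1 (fun s => dX f s y) x.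
Definition dYY (f : R -> R -> R) x y : R := derive1 (fun t => dY f x t) y.
Definition dXY (f : R -> R -> R) x y : R := derive1 (fun t => dX f x t) y.

Definition generator (L : 'I_3 -> 'M[C]_2) (f : R -> R -> R) (x y : R) : R :=
  let w := x +i* y in
  complex.Re (drift L w) * dX f x y + complex.Im (drift L w) * dY f x y
  + 2^-1 * \sum_(j < 3)
      (complex.Re (diffc L j w) ^+ 2 * dXX f x y
       + 2 * complex.Re (diffc L j w) * complex.Im (diffc L j w) * dXY f x y
       + complex.Im (diffc L j w) ^+ 2 * dYY f x y).

Definition laplace_beltrami (f : R -> R -> R) (x y : R) : R :=
  4^-1 * (1 + x ^+ 2 + y ^+ 2) ^+ 2 * (dXX f x y + dYY f x y).

Definition pauli (j : 'I_3) : 'M[C]_2 :=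
  \matrix_(r < 2, s < 2)
    (if val j == 0%N then (if r == s then 0 else 1)
     else if val j == 1%N then
       (if r == s then 0 else if val r == 0%N then - 'i else 'i)
     else (if r == s then (if val r == 0%N then 1 else -1) else 0)).

End QF.

(* Main.v *)
Require Import Defs.
From HB Require Import structures.
From mathcomp Require Import all_boot all_order all_algebra.
From mathcomp Require Import all_classical all_reals all_analysis.
From mathcomp Require Import complex ring lra.
Import Order.TTheory GRing.Theory Num.Theory.
Local Open Scope ring_scope.
Section S.
Local Open Scope complex_scope.
Variable R : realType.
Local Notation C := (R[i]).
Definition i0 : 'I_2 := ord0.
Definition i1 : 'I_2 := lift ord0 ord0.
Definition j0 : 'I_3 := ord0.
Definition j1 : 'I_3 := lift ord0 ord0.
Definition j2 : 'I_3 := lift ord0 (lift ord0 ord0).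
Lemma sum3 (V : nmodType) (F : 'I_3 -> V) : \sum_(j < 3) F j = F j0 + F j1 + F j2.
Proof. by rewrite !big_ord_recl big_ord0 addr0 addrA. Qed.
Lemma sum2 (V : nmodType) (F : 'I_2 -> V) : \sum_(j < 2) F j = F i0 + F i1.
Proof. by rewrite !big_ord_recl big_ord0 addr0. Qed.
Lemma ReD (x y : C) : complex.Re (x + y) = complex.Re x + complex.Re y. Proof. case: x => ? ?; case: y => ? ?. by []. Qed.
Lemma ImD (x y : C) : complex.Im (x + y) = complex.Im x + complex.Im y. Proof. by case: x; case: y. Qed.
Lemma ReN (x : C) : complex.Re (- x) = - complex.Re x. Proof. by case: x. Qed.
Lemma ImN (x : C) : complex.Im (- x) = - complex.Im x. Proof. by case: x. Qed.
Lemma ReM (x y : C) : complex.Re (x * y) = complex.Re x * complex.Re y - complex.Im x * complex.Im y. Proof. by case: x; case: y. Qed.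
Lemma ImM (x y : C) : complex.Im (x * y) = complex.Re x * complex.Im y + complex.Im x * complex.Re y. Proof. by case: x => ? ?; case: y => ? ? /=; rewrite addrC. Qed.
Lemma Re1 : complex.Re (1 : C) = 1. Proof. by []. Qed.
Lemma Im1 : complex.Im (1 : C) = 0. Proof. by []. Qed.
Lemma Re0 : complex.Re (0 : C) = 0. Proof. by []. Qed.
Lemma Im0 : complex.Im (0 : C) = 0. Proof. by []. Qed.
Lemma inv2C : (2^-1 : C) = (2^-1 : R) +i* 0.
Proof. by rewrite complexr0 fmorphV rmorph_nat. Qed.
Lemma ceq (x y : C) : complex.Re x = complex.Re y -> complex.Im x = complex.Im y -> x = y.
Proof. by case: x => ? ?; case: y => ? ? /= -> ->. Qed.
Lemma co0M (A : 'M[C]_2) (v : 'cV[C]_2) : co0 (A *m v) = A i0 i0 * co0 v + A i0 i1 * co1 v.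
Proof. by rewrite /co0 /co1 mxE sum2. Qed.
Lemma co1M (A : 'M[C]_2) (v : 'cV[C]_2) : co1 (A *m v) = A i1 i0 * co0 v + A i1 i1 * co1 v.
Proof. by rewrite /co0 /co1 mxE sum2. Qed.
Lemma mulE (A B : 'M[C]_2) i j : (A *m B) i j = A i i0 * B i0 j + A i i1 * B i1 j.
Proof. by rewrite mxE sum2. Qed.
Lemma W0 (w : C) : co0 (Wv w) = 1. Proof. by rewrite /co0 /Wv mxE. Qed.
Lemma W1 (w : C) : co1 (Wv w) = w. Proof. by rewrite /co1 /Wv mxE. Qed.
Lemma trE (A : 'M[C]_2) : \tr A = A i0 i0 + A i1 i1.
Proof. by rewrite /mxtrace sum2. Qed.
Lemma sa_ent (A : 'M[C]_2) : selfadj A ->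
  [/\ A i0 i0 = complex.Re (A i0 i0) +i* 0, A i1 i1 = complex.Re (A i1 i1) +i* 0,
      A i0 i1 = complex.Re (A i0 i1) +i* complex.Im (A i0 i1) & A i1 i0 = complex.Re (A i0 i1) -i* complex.Im (A i0 i1)].
Proof.
move=> H.
have e : forall i j, (A j i)^* = A i j.
  by move=> i j; rewrite -{2}H /adjmx !mxE.
split.
- have := e i0 i0; case: (A i0 i0) => x y /= [] Hy; congr (_ +i* _); lra.
- have := e i1 i1; case: (A i1 i1) => x y /= [] Hy; congr (_ +i* _); lra.
- by case: (A i0 i1).
- by rewrite -e; case: (A i0 i1).
Qed.
Lemma ord3P (P : 'I_3 -> Prop) : P j0 -> P j1 -> P j2 -> forall j, P j.
Proof.
move=> H0 H1 H2 [[|[|[|n]]] Hn] //.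
- by have -> : Ordinal Hn = j0 by apply: val_inj.
- by have -> : Ordinal Hn = j1 by apply: val_inj.
- by have -> : Ordinal Hn = j2 by apply: val_inj.
Qed.
Lemma ord2P (P : 'I_2 -> Prop) : P i0 -> P i1 -> forall j, P j.
Proof.
move=> H0 H1 [[|[|n]] Hn] //.
- by have -> : Ordinal Hn = i0 by apply: val_inj.
- by have -> : Ordinal Hn = i1 by apply: val_inj.
Qed.
Lemma MMt (M : 'M[R]_3) (k : R) : k != 0 -> M *m M^T = k%:M -> M^T *m M = k%:M.
Proof.
move=> hk H.
have H1 : M *m (k^-1 *: M^T) = 1%:M.
  by rewrite -scalemxAr H scale_scalar_mx mulVf.
have := mulmx1C H1; rewrite -scalemxAl => H2.
have -> : M^T *m M = k *: (k^-1 *: (M^T *m M)) by rewrite scalerA divff // scale1r.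
by rewrite H2 scalemx1.
Qed.
Definition mk3 (u v w : 'I_3 -> R) : 'M[R]_3 :=
  \matrix_(i < 3, l < 3) (if l == j0 then u i else if l == j1 then v i else w i).
Lemma test : (j0 == j1) = false /\ (j1 == j1) = true /\ (j2 == j0) = false.
Proof. by []. Qed.
Definition colrel (u v w : 'I_3 -> R) (k : R) :=
  [/\ u j0 * u j0 + u j1 * u j1 + u j2 * u j2 = k,
      v j0 * v j0 + v j1 * v j1 + v j2 * v j2 = k,
      w j0 * w j0 + w j1 * w j1 + w j2 * w j2 = k &
     [/\ u j0 * v j0 + u j1 * v j1 + u j2 * v j2 = 0,
      u j0 * w j0 + u j1 * w j1 + u j2 * w j2 = 0 &
      v j0 * w j0 + v j1 * w j1 + v j2 * w j2 = 0]].
Definition rowrel (u v w : 'I_3 -> R) (k : R) :=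
  forall i j, u i * u j + v i * v j + w i * w j = k * (i == j)%:R.
Lemma colE u v w k : colrel u v w k <-> (mk3 u v w)^T *m (mk3 u v w) = k%:M.
Proof.
split.
- case=> h1 h2 h3 [h4 h5 h6]; apply/matrixP => l m; rewrite !mxE sum3 !mxE.
  move: l m; apply: ord3P; apply: ord3P => /=; lra.
- move=> H; have E : forall l m, ((mk3 u v w)^T *m (mk3 u v w)) l m = (k%:M : 'M[R]_3) l m by move=> l m; rewrite H.
  have e := fun l m => etrans (esym (mxE _ _ _ _)) (E l m).
  split; [| | |split].
  + by have := E j0 j0; rewrite !mxE sum3 !mxE /= mulr1n.
  + by have := E j1 j1; rewrite !mxE sum3 !mxE /= mulr1n.
  + by have := E j2 j2; rewrite !mxE sum3 !mxE /= mulr1n.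
  + by have := E j0 j1; rewrite !mxE sum3 !mxE /= mulr0n.
  + by have := E j0 j2; rewrite !mxE sum3 !mxE /= mulr0n.
  + by have := E j1 j2; rewrite !mxE sum3 !mxE /= mulr0n.
Qed.
Lemma rowE u v w k : rowrel u v w k <-> (mk3 u v w) *m (mk3 u v w)^T = k%:M.
Proof.
split.
- move=> H; apply/matrixP => l m; rewrite !mxE sum3 !mxE /=.
  by rewrite H mulr_natr.
- move=> H i j; have := congr1 (fun M : 'M[R]_3 => M i j) H; rewrite !mxE sum3 !mxE /=.
  by move=> ->; rewrite mulr_natr.
Qed.
Lemma cols_rows u v w k : k != 0 -> colrel u v w k -> rowrel u v w k.
Proof.
move=> hk /colE H; apply/rowE.
have := @MMt (mk3 u v w)^T k hk; rewrite trmxK; exact.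
Qed.
Lemma rows_cols u v w k : k != 0 -> rowrel u v w k -> colrel u v w k.
Proof. by move=> hk /rowE H; apply/colE; apply: MMt. Qed.
Lemma drift_form (L : 'I_3 -> 'M[C]_2) (w : C) : (forall j, selfadj (L j)) ->
  drift L w = 2^-1 * \sum_(j < 3) (w * (L j i0 i0 * L j i0 i0 + L j i0 i1 * L j i1 i0
       + (L j i0 i0 * L j i0 i1 + L j i0 i1 * L j i1 i1) * w)
     - (L j i1 i0 * L j i0 i0 + L j i1 i1 * L j i1 i0
       + (L j i1 i0 * L j i0 i1 + L j i1 i1 * L j i1 i1) * w))
   + \sum_(j < 3) (w * (L j i0 i0 + L j i0 i1 * w) ^+ 2
       - (L j i0 i0 + L j i0 i1 * w) * (L j i1 i0 + L j i1 i1 * w)).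
Proof.
move=> HL; rewrite /drift; congr (_ * _ + _); apply: eq_bigr => j _.
  have := HL j; rewrite /selfadj => ->.
  by rewrite !co0M !co1M !mulE !W0 !W1 !mulr1.
by rewrite !co0M !co1M !W0 !W1 !mulr1.
Qed.
Lemma diffc_form (L : 'I_3 -> 'M[C]_2) j (w : C) :
  diffc L j w = L j i1 i0 + L j i1 i1 * w - w * (L j i0 i0 + L j i0 i1 * w).
Proof. by rewrite /diffc co0M co1M W0 W1 !mulr1. Qed.
Lemma sum_gen (u v : 'I_3 -> R) A B Cc : \sum_(j < 3) (u j ^+ 2 * A + 2 * u j * v j * B + v j ^+ 2 * Cc)
  = (\sum_(j < 3) u j ^+ 2) * A + 2 * (\sum_(j < 3) u j * v j) * B + (\sum_(j < 3) v j ^+2) * Cc.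
Proof. rewrite !sum3; ring. Qed.
Lemma generator_eq (L : 'I_3 -> 'M[C]_2) f x y :
  generator L f x y =
  complex.Re (drift L (x +i* y)) * dX f x y + complex.Im (drift L (x +i* y)) * dY f x y
  + 2^-1 * ((\sum_(j < 3) complex.Re (diffc L j (x +i* y)) ^+ 2) * dXX f x y
     + 2 * (\sum_(j < 3) complex.Re (diffc L j (x +i* y)) * complex.Im (diffc L j (x +i* y))) * dXY f x y
     + (\sum_(j < 3) complex.Im (diffc L j (x +i* y)) ^+ 2) * dYY f x y).
Proof.
rewrite /generator -(sum_gen (fun j => complex.Re (diffc L j (x +i* y))) (fun j => complex.Im (diffc L j (x +i* y)))).
by [].
Qed.
Lemma d_cst (k t : R) : derive1 (fun _ : R => k) t = 0.
Proof. exact: derive1_cst. Qed.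
Lemma d_id (t : R) : derive1 (fun s : R => s) t = 1.
Proof. exact: derive1_id. Qed.
Lemma d_sq (t : R) : derive1 (fun s : R => s * s) t = 2 * t.
Proof. rewrite derive1E deriveM //= derive_id. rewrite /GRing.scale /= !mulr1. lra. Qed.
Lemma d_mr (t r : R) : derive1 (fun s : R => s * r) t = r.
Proof. by rewrite derive1Mr // derive1_id mul1r. Qed.
Lemma d_ml (t r : R) : derive1 (fun s : R => r * s) t = r.
Proof. by rewrite derive1Ml // derive1_id mulr1. Qed.
Lemma der_ext (g h : R -> R) t : (forall s, g s = h s) -> derive1 g t = derive1 h t.
Proof. by move=> /funext ->. Qed.
Lemma der_c (g : R -> R) c t : (forall s, g s = c) -> derive1 g t = 0.
Proof. by move=> H; rewrite (@der_ext g (fun _ => c)) ?d_cst. Qed.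
Definition T5 (f : R -> R -> R) (x y : R) v1 v2 v3 v4 v5 :=
  [/\ dX f x y = v1, dY f x y = v2, dXX f x y = v3, dXY f x y = v4 & dYY f x y = v5].
Lemma t1 (x y : R) : T5 (fun s _ => s) x y 1 0 0 0 0.
Proof. rewrite /T5 /dXX /dXY /dYY /dX /dY; split.
- exact: d_id.
- exact: d_cst.
- apply: der_c => s. exact: d_id.
- exact: d_cst.
- by apply: der_c => s; exact: d_cst.
Qed.
Lemma t2 (x y : R) : T5 (fun _ t => t) x y 0 1 0 0 0.
Proof. rewrite /T5 /dXX /dXY /dYY /dX /dY; split.
- exact: d_cst.
- exact: d_id.
- by apply: der_c => s; exact: d_cst.
- by apply: der_c => s; exact: d_cst.
- by apply: der_c => s; exact: d_id.
Qed.
Lemma t3 (x y : R) : T5 (fun s _ => s * s) x y (2 * x) 0 2 0 0.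
Proof. rewrite /T5 /dXX /dXY /dYY /dX /dY; split.
- exact: d_sq.
- exact: d_cst.
- rewrite (@der_ext _ (fun s => 2 * s)); [exact: d_ml | move=> s; exact: d_sq].
- exact: d_cst.
- by apply: der_c => s; exact: d_cst.
Qed.
Lemma t4 (x y : R) : T5 (fun _ t => t * t) x y 0 (2 * y) 0 0 2.
Proof. rewrite /T5 /dXX /dXY /dYY /dX /dY; split.
- exact: d_cst.
- exact: d_sq.
- by apply: der_c => s; exact: d_cst.
- by apply: der_c => s; exact: d_cst.
- rewrite (@der_ext _ (fun s => 2 * s)); [exact: d_ml | move=> s; exact: d_sq].
Qed.
Lemma t5 (x y : R) : T5 (fun s t => s * t) x y y x 0 1 0.
Proof. rewrite /T5 /dXX /dXY /dYY /dX /dY; split.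
- exact: d_mr.
- exact: d_ml.
- by apply: der_c => s; exact: d_mr.
- rewrite (@der_ext _ (fun s => s)); [exact: d_id | move=> s; exact: d_mr].
- by apply: der_c => s; exact: d_ml.
Qed.
Definition Lpar (L : 'I_3 -> 'M[C]_2) (p a b r : 'I_3 -> R) := forall j,
  [/\ L j i0 i0 = p j +i* 0, L j i1 i1 = r j +i* 0, L j i0 i1 = a j +i* b j & L j i1 i0 = a j -i* b j].
Lemma Lpar_ex L : (forall j, selfadj (L j)) -> exists p a b r, Lpar L p a b r.
Proof.
move=> HL; exists (fun j => complex.Re (L j i0 i0)), (fun j => complex.Re (L j i0 i1)),
  (fun j => complex.Im (L j i0 i1)), (fun j => complex.Re (L j i1 i1)) => j.
by have [] := sa_ent (L j) (HL j).
Qed.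
Lemma ReC (x : R) : complex.Re (x%:C) = x. Proof. by []. Qed.
Lemma ImC (x : R) : complex.Im (x%:C) = 0. Proof. by []. Qed.
Ltac push := rewrite ?inv2C ?(ReD, ImD, ReN, ImN, ReM, ImM) /=.
Lemma U_form L p a b r j x y : Lpar L p a b r ->
  complex.Re (diffc L j (x +i* y)) = a j + (r j - p j) * x - (a j * (x ^+ 2 - y ^+ 2) - 2 * b j * x * y).
Proof. move=> E; have [e1 e2 e3 e4] := E j; rewrite diffc_form e1 e2 e3 e4; push; ring. Qed.
Lemma V_form L p a b r j x y : Lpar L p a b r ->
  complex.Im (diffc L j (x +i* y)) = - b j + (r j - p j) * y - (2 * a j * x * y + b j * (x ^+ 2 - y ^+ 2)).
Proof. move=> E; have [e1 e2 e3 e4] := E j; rewrite diffc_form e1 e2 e3 e4; push; ring. Qed.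
Lemma fwd_facts L (c : R) :
  (forall f x y, generator L f x y = c * laplace_beltrami f x y) -> forall x y,
  [/\ complex.Re (drift L (x +i* y)) = 0, complex.Im (drift L (x +i* y)) = 0,
      \sum_(j < 3) complex.Re (diffc L j (x +i* y)) ^+ 2 = c / 2 * (1 + x ^+ 2 + y ^+ 2) ^+ 2,
      \sum_(j < 3) complex.Im (diffc L j (x +i* y)) ^+ 2 = c / 2 * (1 + x ^+ 2 + y ^+ 2) ^+ 2 &
      \sum_(j < 3) complex.Re (diffc L j (x +i* y)) * complex.Im (diffc L j (x +i* y)) = 0].
Proof.
move=> H x y.
have h1 := H (fun s _ => s) x y; have [e1 e2 e3 e4 e5] := t1 x y.
rewrite generator_eq /laplace_beltrami e1 e2 e3 e4 e5 in h1.
have h2 := H (fun _ t => t) x y; have [f1 f2 f3 f4 f5] := t2 x y.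
rewrite generator_eq /laplace_beltrami f1 f2 f3 f4 f5 in h2.
have h3 := H (fun s _ => s * s) x y; have [g1 g2 g3 g4 g5] := t3 x y.
rewrite generator_eq /laplace_beltrami g1 g2 g3 g4 g5 in h3.
have h4 := H (fun _ t => t * t) x y; have [k1 k2 k3 k4 k5] := t4 x y.
rewrite generator_eq /laplace_beltrami k1 k2 k3 k4 k5 in h4.
have h5 := H (fun s t => s * t) x y; have [l1 l2 l3 l4 l5] := t5 x y.
rewrite generator_eq /laplace_beltrami l1 l2 l3 l4 l5 in h5.
move: h1 h2 h3 h4 h5.
move: (complex.Re (drift L (x +i* y))) (complex.Im (drift L (x +i* y)))
  (\sum_(j < 3) complex.Re (diffc L j (x +i* y)) ^+ 2)
  (\sum_(j < 3) complex.Im (diffc L j (x +i* y)) ^+ 2)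
  (\sum_(j < 3) complex.Re (diffc L j (x +i* y)) * complex.Im (diffc L j (x +i* y)))
  => RD ID SU SV SUV h1 h2 h3 h4 h5.
clear -h1 h2 h3 h4 h5.
have D1 : RD = 0 by lra.
have D2 : ID = 0 by lra.
rewrite D1 D2 in h3 h4 h5.
split => //; lra.
Qed.
Definition uf (p a b r : 'I_3 -> R) j (x y : R) :=
  a j + (r j - p j) * x - (a j * (x ^+ 2 - y ^+ 2) - 2 * b j * x * y).
Definition vf (p a b r : 'I_3 -> R) j (x y : R) :=
  - b j + (r j - p j) * y - (2 * a j * x * y + b j * (x ^+ 2 - y ^+ 2)).
Lemma facts_par L p a b r (c : R) : Lpar L p a b r ->
  (forall f x y, generator L f x y = c * laplace_beltrami f x y) -> forall x y,
  [/\ complex.Re (drift L (x +i* y)) = 0, complex.Im (drift L (x +i* y)) = 0,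
      uf p a b r j0 x y ^+ 2 + uf p a b r j1 x y ^+ 2 + uf p a b r j2 x y ^+ 2 = c / 2 * (1 + x ^+ 2 + y ^+ 2) ^+ 2,
      vf p a b r j0 x y ^+ 2 + vf p a b r j1 x y ^+ 2 + vf p a b r j2 x y ^+ 2 = c / 2 * (1 + x ^+ 2 + y ^+ 2) ^+ 2 &
      uf p a b r j0 x y * vf p a b r j0 x y + uf p a b r j1 x y * vf p a b r j1 x y
      + uf p a b r j2 x y * vf p a b r j2 x y = 0].
Proof.
move=> E H x y; have [h1 h2 h3 h4 h5] := fwd_facts L c H x y; split => //.
- by rewrite -h3 sum3 (U_form L p a b r j0 x y E) (U_form L p a b r j1 x y E) (U_form L p a b r j2 x y E).
- by rewrite -h4 sum3 (V_form L p a b r j0 x y E) (V_form L p a b r j1 x y E) (V_form L p a b r j2 x y E).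
- rewrite -h5 sum3 (U_form L p a b r j0 x y E) (U_form L p a b r j1 x y E) (U_form L p a b r j2 x y E).
  by rewrite (V_form L p a b r j0 x y E) (V_form L p a b r j1 x y E) (V_form L p a b r j2 x y E).
Qed.

Lemma s_zero (d a b s : 'I_3 -> R) k : k != 0 -> rowrel d a b k ->
  d j0 * s j0 + d j1 * s j1 + d j2 * s j2 = 0 ->
  a j0 * s j0 + a j1 * s j1 + a j2 * s j2 = 0 ->
  b j0 * s j0 + b j1 * s j1 + b j2 * s j2 = 0 -> forall i, s i = 0.
Proof.
move=> hk Hr h1 h2 h3 i.
have e : \sum_(j < 3) (d i * d j + a i * a j + b i * b j) * s j = k * s i.
  under eq_bigr do rewrite Hr.
  rewrite (bigD1 i) //= eqxx mulr1 big1 ?addr0 // => j /negbTE.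
  by rewrite eq_sym => ->; rewrite mulr0 mul0r.
have e2 : \sum_(j < 3) (d i * d j + a i * a j + b i * b j) * s j =
  d i * (d j0 * s j0 + d j1 * s j1 + d j2 * s j2) + a i * (a j0 * s j0 + a j1 * s j1 + a j2 * s j2)
  + b i * (b j0 * s j0 + b j1 * s j1 + b j2 * s j2) by rewrite sum3; ring.
move: e; rewrite e2 h1 h2 h3 !mulr0 !addr0 => /esym/eqP; rewrite mulf_eq0 (negbTE hk) /=.
by move/eqP.
Qed.
Lemma recon_row (p a b c' : 'I_3 -> R) k : k != 0 -> rowrel p a b k -> forall i,
  k^-1 * (p i * (c' j0 * p j0 + c' j1 * p j1 + c' j2 * p j2)
        + a i * (c' j0 * a j0 + c' j1 * a j1 + c' j2 * a j2)
        + b i * (c' j0 * b j0 + c' j1 * b j1 + c' j2 * b j2)) = c' i.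
Proof.
move=> hk Hr i.
have e : \sum_(j < 3) (p i * p j + a i * a j + b i * b j) * c' j = k * c' i.
  under eq_bigr do rewrite Hr.
  rewrite (bigD1 i) //= eqxx mulr1 big1 ?addr0 // => j /negbTE.
  by rewrite eq_sym => ->; rewrite mulr0 mul0r.
rewrite sum3 in e.
have -> : p i * (c' j0 * p j0 + c' j1 * p j1 + c' j2 * p j2)
        + a i * (c' j0 * a j0 + c' j1 * a j1 + c' j2 * a j2)
        + b i * (c' j0 * b j0 + c' j1 * b j1 + c' j2 * b j2) = k * c' i by rewrite -e; ring.
by rewrite mulKf.
Qed.
Lemma recon_col (p a b : 'I_3 -> R) k p' a' b' : k != 0 -> colrel p a b k ->
  let cf := fun j => k^-1 * (p j * p' + a j * a' + b j * b') in
  [/\ cf j0 * p j0 + cf j1 * p j1 + cf j2 * p j2 = p',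
      cf j0 * a j0 + cf j1 * a j1 + cf j2 * a j2 = a' &
      cf j0 * b j0 + cf j1 * b j1 + cf j2 * b j2 = b'].
Proof.
move=> hk [h1 h2 h3 [h4 h5 h6]] cf; rewrite /cf.
split.
- transitivity (k^-1 * (p' * (p j0 * p j0 + p j1 * p j1 + p j2 * p j2) + a' * (p j0 * a j0 + p j1 * a j1 + p j2 * a j2)
     + b' * (p j0 * b j0 + p j1 * b j1 + p j2 * b j2))); first by ring.
  by rewrite h1 h4 h5 !mulr0 !addr0 mulrC mulfK.
- transitivity (k^-1 * (p' * (p j0 * a j0 + p j1 * a j1 + p j2 * a j2) + a' * (a j0 * a j0 + a j1 * a j1 + a j2 * a j2)
     + b' * (a j0 * b j0 + a j1 * b j1 + a j2 * b j2))); first by ring.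
  by rewrite h2 h4 h6 !mulr0 add0r addr0 mulrC mulfK.
- transitivity (k^-1 * (p' * (p j0 * b j0 + p j1 * b j1 + p j2 * b j2) + a' * (a j0 * b j0 + a j1 * b j1 + a j2 * b j2)
     + b' * (b j0 * b j0 + b j1 * b j1 + b j2 * b j2))); first by ring.
  by rewrite h3 h5 h6 !mulr0 !add0r mulrC mulfK.
Qed.
Lemma forward L (c : R) : (forall j, selfadj (L j)) -> c != 0 ->
  (forall f x y, generator L f x y = c * laplace_beltrami f x y) ->
  is_tsa_basis L /\ orth_with L c.
Proof.
move=> HL hc H.
have [p [a [b [r E]]]] := Lpar_ex L HL.
have E00 j : L j i0 i0 = p j +i* 0 by case: (E j).
have E11 j : L j i1 i1 = r j +i* 0 by case: (E j).
have E01 j : L j i0 i1 = a j +i* b j by case: (E j).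
have E10 j : L j i1 i0 = a j -i* b j by case: (E j).
have F := facts_par L p a b r c E H.
have [D0r D0i S0u S0v S0uv] := F 0 0.
have [D1r D1i S1u S1v S1uv] := F 1 0.
have [_ _ S2u S2v S2uv] := F 0 1.
rewrite /uf /vf in S0u S0v S0uv S1u S1v S1uv S2u S2v S2uv.
move: D0r D0i D1r.
rewrite !drift_form // !sum3 !E00 !E11 !E01 !E10 ?expr2 ?inv2C.
rewrite /= => D0r D0i D1r.
clear F E H D1i.
have hk : c / 2 != 0 by apply: contra hc => /eqP h; apply/eqP; lra.
have F1 : a j0 * a j0 + a j1 * a j1 + a j2 * a j2 = c / 2 by clear -S0u; lra.
have F2 : b j0 * b j0 + b j1 * b j1 + b j2 * b j2 = c / 2 by clear -S0v; lra.
have F3 : a j0 * b j0 + a j1 * b j1 + a j2 * b j2 = 0 by clear -S0uv; lra.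
have F4 : (p j0 - r j0) * (p j0 - r j0) + (p j1 - r j1) * (p j1 - r j1) + (p j2 - r j2) * (p j2 - r j2) = 2 * c by clear -S1u; lra.
have F5 : (p j0 - r j0) * b j0 + (p j1 - r j1) * b j1 + (p j2 - r j2) * b j2 = 0 by clear -S1uv; lra.
have F6 : (p j0 - r j0) * a j0 + (p j1 - r j1) * a j1 + (p j2 - r j2) * a j2 = 0 by clear -S2uv; lra.
have F7 : a j0 * (3 * p j0 + r j0) + a j1 * (3 * p j1 + r j1) + a j2 * (3 * p j2 + r j2) = 0 by clear -D0r; lra.
have F8 : b j0 * (3 * p j0 + r j0) + b j1 * (3 * p j1 + r j1) + b j2 * (3 * p j2 + r j2) = 0 by clear -D0i; lra.
have F9 : (p j0 - r j0) * (p j0 + r j0) + (p j1 - r j1) * (p j1 + r j1) + (p j2 - r j2) * (p j2 + r j2) = 0.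
  by clear -D1r F2 F4 F6; lra.
have Hcol : colrel (fun j => (p j - r j) / 2) a b (c / 2).
  by rewrite /colrel /=; clear -F1 F2 F3 F4 F5 F6; split; [lra|lra|lra|split; lra].
have Hrow := cols_rows _ _ _ _ hk Hcol.
have Hs := s_zero _ _ _ (fun j => p j + r j) _ hk Hrow.
have Hr : r = (fun j => - p j).
  apply: funext => j; have := Hs _ _ _ j; rewrite /=.
  move=> h; rewrite -[LHS]addr0 -(h _ _ _); [lra | clear -F9; lra | clear -F7 F6; lra | clear -F8 F5; lra].
subst r.
have ep : (fun j => (p j - - p j) / 2) = p by apply: funext => j; lra.
rewrite ep in Hcol Hrow.
clear ep Hs S0u S0v S0uv S1u S1v S1uv S2u S2v S2uv D0r D0i D1r F1 F2 F3 F4 F5 F6 F7 F8 F9.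
split; last first.
  move=> j k; rewrite trE !mulE !E00 !E11 !E01 !E10; apply: ceq; rewrite /=.
    have := Hrow j k; move: ((j == k)%:R) => t; clear; lra.
  by lra.
split.
  move=> j; split; first exact: HL.
  by rewrite trE E00 E11; apply: ceq; rewrite /=; lra.
move=> M [HMsa HMtr].
have [M00 M11 M01 M10] := sa_ent M HMsa.
move: HMtr; rewrite trE M00 M11 => /(congr1 (@complex.Re R)) /= Htr.
move: (complex.Re (M i0 i0)) (complex.Re (M i1 i1)) (complex.Re (M i0 i1)) (complex.Im (M i0 i1)) M00 M11 M01 M10 Htr
  => p' r' a' b' M00 M11 M01 M10 Htr.
have [R1 R2 R3] := recon_col p a b (c / 2) p' a' b' hk Hcol.
exists (fun j => (c / 2)^-1 * (p j * p' + a j * a' + b j * b')); split.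
  apply/matrixP; apply: ord2P; apply: ord2P; rewrite summxE sum3 !mxE ?M00 ?M11 ?M01 ?M10 ?E00 ?E11 ?E01 ?E10;
    apply: ceq; rewrite /=.
  1-8: by clear -R1 R2 R3 Htr; lra.
move=> c' Hc'.
have h00 := congr1 (fun N : 'M[C]_2 => N i0 i0) Hc'.
have h01 := congr1 (fun N : 'M[C]_2 => N i0 i1) Hc'.
rewrite /= summxE sum3 !mxE M00 !E00 in h00.
rewrite /= summxE sum3 !mxE M01 !E01 in h01.
have P1 : p' = c' j0 * p j0 + c' j1 * p j1 + c' j2 * p j2.
  by have := congr1 (@complex.Re R) h00; rewrite /= => ->; ring.
have P2 : a' = c' j0 * a j0 + c' j1 * a j1 + c' j2 * a j2.
  by have := congr1 (@complex.Re R) h01; rewrite /= => ->; ring.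
have P3 : b' = c' j0 * b j0 + c' j1 * b j1 + c' j2 * b j2.
  by have := congr1 (@complex.Im R) h01; rewrite /= => ->; ring.
apply: funext => i; rewrite P1 P2 P3; exact: recon_row.
Qed.

Lemma K1 (L : 'I_3 -> 'M[C]_2) (w : C) : (forall j, selfadj (L j)) ->
  (forall j, L j i1 i1 = - L j i0 i0) ->
  \sum_(j < 3) L j i0 i1 * L j i1 i0 = 2 * \sum_(j < 3) L j i0 i0 * L j i0 i0 ->
  \sum_(j < 3) L j i0 i0 * L j i0 i1 = 0 ->
  \sum_(j < 3) L j i0 i1 * L j i0 i1 = 0 ->
  \sum_(j < 3) L j i0 i0 * L j i1 i0 = 0 ->
  drift L w = 0.
Proof.
move=> HL E11 h1 h2 h3 h4.
rewrite drift_form //.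
transitivity (w * (2 * \sum_(j < 3) L j i0 i0 * L j i0 i0 - \sum_(j < 3) L j i0 i1 * L j i1 i0)
  + w ^+ 2 * (3 * \sum_(j < 3) L j i0 i0 * L j i0 i1) + w ^+ 3 * \sum_(j < 3) L j i0 i1 * L j i0 i1
  - \sum_(j < 3) L j i0 i0 * L j i1 i0).
  by rewrite !sum3 !E11; ring.
by rewrite h1 h2 h3 h4; ring.
Qed.
Lemma K2 (L : 'I_3 -> 'M[C]_2) (w : C) :
  (forall j, L j i1 i1 = - L j i0 i0) ->
  \sum_(j < 3) L j i0 i1 * L j i1 i0 = 2 * \sum_(j < 3) L j i0 i0 * L j i0 i0 ->
  \sum_(j < 3) L j i0 i0 * L j i0 i1 = 0 ->
  \sum_(j < 3) L j i0 i1 * L j i0 i1 = 0 ->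
  \sum_(j < 3) L j i0 i0 * L j i1 i0 = 0 ->
  \sum_(j < 3) L j i1 i0 * L j i1 i0 = 0 ->
  \sum_(j < 3) diffc L j w ^+ 2 = 0.
Proof.
move=> E11 h1 h2 h3 h4 h5.
transitivity (\sum_(j < 3) L j i1 i0 * L j i1 i0 - 4 * w * \sum_(j < 3) L j i0 i0 * L j i1 i0
  - 2 * w ^+ 2 * \sum_(j < 3) L j i0 i1 * L j i1 i0 + 4 * w ^+ 2 * \sum_(j < 3) L j i0 i0 * L j i0 i0
  + 4 * w ^+ 3 * \sum_(j < 3) L j i0 i0 * L j i0 i1 + w ^+ 4 * \sum_(j < 3) L j i0 i1 * L j i0 i1).
  by rewrite !sum3 !diffc_form !E11; ring.
by rewrite h1 h2 h3 h4 h5; ring.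
Qed.
Lemma cD (x y : C) : conjc (x + y) = conjc x + conjc y.
Proof. by case: x => ? ?; case: y => ? ?; apply: ceq; rewrite /= ?opprD. Qed.
Lemma cN (x : C) : conjc (- x) = - conjc x.
Proof. by case: x => ? ?; apply: ceq; rewrite /=. Qed.
Lemma cM (x y : C) : conjc (x * y) = conjc x * conjc y.
Proof. by case: x => ? ?; case: y => ? ?; apply: ceq; rewrite /=; ring. Qed.
Lemma K3 (L : 'I_3 -> 'M[C]_2) (w : C) :
  (forall j, L j i1 i1 = - L j i0 i0) ->
  (forall j, conjc (L j i0 i0) = L j i0 i0) ->
  (forall j, conjc (L j i1 i0) = L j i0 i1) ->
  (forall j, conjc (L j i0 i1) = L j i1 i0) ->
  \sum_(j < 3) L j i0 i1 * L j i1 i0 = 2 * \sum_(j < 3) L j i0 i0 * L j i0 i0 ->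
  \sum_(j < 3) L j i0 i0 * L j i0 i1 = 0 ->
  \sum_(j < 3) L j i0 i1 * L j i0 i1 = 0 ->
  \sum_(j < 3) L j i0 i0 * L j i1 i0 = 0 ->
  \sum_(j < 3) L j i1 i0 * L j i1 i0 = 0 ->
  \sum_(j < 3) diffc L j w * conjc (diffc L j w) = 2 * (\sum_(j < 3) L j i0 i0 * L j i0 i0) * (1 + w * conjc w) ^+ 2.
Proof.
move=> E11 c0 c1 c2 h1 h2 h3 h4 h5.
transitivity (\sum_(j < 3) L j i0 i1 * L j i1 i0
  - 2 * conjc w * \sum_(j < 3) L j i0 i0 * L j i1 i0
  - conjc w ^+ 2 * \sum_(j < 3) L j i1 i0 * L j i1 i0
  - 2 * w * \sum_(j < 3) L j i0 i0 * L j i0 i1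
  + 4 * w * conjc w * \sum_(j < 3) L j i0 i0 * L j i0 i0
  + 2 * w * conjc w ^+ 2 * \sum_(j < 3) L j i0 i0 * L j i1 i0
  - w ^+ 2 * \sum_(j < 3) L j i0 i1 * L j i0 i1
  + 2 * w ^+ 2 * conjc w * \sum_(j < 3) L j i0 i0 * L j i0 i1
  + w ^+ 2 * conjc w ^+ 2 * \sum_(j < 3) L j i0 i1 * L j i1 i0).
  rewrite !sum3 !diffc_form !E11 !(cD, cN, cM) !c0 !c1 !c2; ring.
by rewrite h1 h2 h3 h4 h5; ring.
Qed.
Lemma ReX2 (z : C) : complex.Re (z ^+ 2) = complex.Re z ^+ 2 - complex.Im z ^+ 2.
Proof. by case: z => u v; rewrite !expr2 /=. Qed.
Lemma ImX2 (z : C) : complex.Im (z ^+ 2) = 2 * complex.Re z * complex.Im z.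
Proof. by case: z => u v; rewrite !expr2 /=; ring. Qed.
Lemma ReJ (z : C) : complex.Re (z * conjc z) = complex.Re z ^+ 2 + complex.Im z ^+ 2.
Proof. by case: z => u v; rewrite !expr2 /=; ring. Qed.
Lemma backward L (a0 : R) : (forall j, selfadj (L j)) -> is_tsa_basis L -> orth_with L a0 ->
  a0 != 0 /\ forall f x y, generator L f x y = a0 * laplace_beltrami f x y.
Proof.
move=> HL [Htsa Hbas] Horth.
have [p [qa [qb [r E]]]] := Lpar_ex L HL.
have E00 j : L j i0 i0 = p j +i* 0 by case: (E j).
have E11 j : L j i1 i1 = r j +i* 0 by case: (E j).
have E01 j : L j i0 i1 = qa j +i* qb j by case: (E j).
have E10 j : L j i1 i0 = qa j -i* qb j by case: (E j).
have Hr : r = (fun j => - p j).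
  apply: funext => j; have [_] := Htsa j; rewrite trE E00 E11 => /(congr1 (@complex.Re R)) /= h; lra.
subst r.
have Hrow : rowrel p qa qb (a0 / 2).
  move=> j k; have := Horth j k; rewrite trE !mulE !E00 !E11 !E01 !E10 => /(congr1 (@complex.Re R)) /=.
  move: ((j == k)%:R) => t; clear; lra.
have ha : a0 != 0.
  apply/negP => /eqP ha0.
  have z j : p j = 0.
    have := Hrow j j; rewrite eqxx mulr1 ha0 => h.
    have h0 := sqr_ge0 (p j); have h1 := sqr_ge0 (qa j); have h2 := sqr_ge0 (qb j); rewrite !expr2 in h0 h1 h2.
    have : p j * p j = 0 by clear -h h0 h1 h2; lra.
    by move/eqP; rewrite mulf_eq0 orbb => /eqP.
  pose M0 : 'M[C]_2 := \matrix_(i < 2, k < 2) (if i == k then (if i == i0 then 1 else -1) else 0).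
  have HM0 : traceless_sa M0.
    split.
      apply/matrixP; apply: ord2P; apply: ord2P; rewrite /adjmx !mxE /=; apply: ceq; rewrite /=; lra.
    by rewrite trE !mxE /=; apply: ceq; rewrite /=; lra.
  have [c' [Hc' _]] := Hbas M0 HM0.
  have m00 : M0 i0 i0 = 1 by rewrite /M0 mxE.
  have h : M0 i0 i0 = (\sum_(j < 3) (c' j)%:C *: L j) i0 i0 by rewrite -Hc'.
  rewrite m00 summxE sum3 !mxE !E00 !z in h.
  move: h => /(congr1 (@complex.Re R)) /=; lra.
have hk : a0 / 2 != 0 by apply: contra ha => /eqP h; apply/eqP; lra.
have [C1 C2 C3 [C4 C5 C6]] := rows_cols _ _ _ _ hk Hrow.
have B0 : \sum_(j < 3) L j i0 i0 * L j i0 i0 = (a0 / 2) +i* 0.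
  by rewrite !sum3 !E00; apply: ceq; rewrite /=; clear -C1; lra.
have B1 : \sum_(j < 3) L j i0 i1 * L j i1 i0 = 2 * \sum_(j < 3) L j i0 i0 * L j i0 i0.
  by rewrite !sum3 !E00 !E01 !E10; apply: ceq; rewrite /=; clear -C1 C2 C3; lra.
have B2 : \sum_(j < 3) L j i0 i0 * L j i0 i1 = 0.
  by rewrite !sum3 !E00 !E01; apply: ceq; rewrite /=; clear -C4 C5; lra.
have B3 : \sum_(j < 3) L j i0 i1 * L j i0 i1 = 0.
  by rewrite !sum3 !E01; apply: ceq; rewrite /=; clear -C2 C3 C6; lra.
have B4 : \sum_(j < 3) L j i0 i0 * L j i1 i0 = 0.
  by rewrite !sum3 !E00 !E10; apply: ceq; rewrite /=; clear -C4 C5; lra.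
have B5 : \sum_(j < 3) L j i1 i0 * L j i1 i0 = 0.
  by rewrite !sum3 !E10; apply: ceq; rewrite /=; clear -C2 C3 C6; lra.
have E11' j : L j i1 i1 = - L j i0 i0 by rewrite E11 E00; apply: ceq; rewrite /=; lra.
have c0 j : conjc (L j i0 i0) = L j i0 i0 by rewrite E00; apply: ceq; rewrite /=; lra.
have c1 j : conjc (L j i1 i0) = L j i0 i1 by rewrite E10 E01; apply: ceq; rewrite /=; lra.
have c2 j : conjc (L j i0 i1) = L j i1 i0 by rewrite E10 E01; apply: ceq; rewrite /=; lra.
split => // f x y.
have k1 := K1 L (x +i* y) HL E11' B1 B2 B3 B4.
have k2 := K2 L (x +i* y) E11' B1 B2 B3 B4 B5.
have k3 := K3 L (x +i* y) E11' c0 c1 c2 B1 B2 B3 B4 B5.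
rewrite B0 sum3 in k3; rewrite sum3 in k2.
rewrite generator_eq k1 !sum3 /laplace_beltrami.
move: k2 k3; move: (diffc L j0 (x +i* y)) (diffc L j1 (x +i* y)) (diffc L j2 (x +i* y)) => s0 s1 s2 k2 k3.
have k2r := congr1 (@complex.Re R) k2; have k2i := congr1 (@complex.Im R) k2.
have k3r := congr1 (@complex.Re R) k3.
rewrite !ReD !ReX2 /= in k2r; rewrite !ImD !ImX2 /= in k2i; rewrite !ReD !ReJ /= in k3r.
have R0 : complex.Re (0 : C) = 0 by [].
have I0 : complex.Im (0 : C) = 0 by [].
rewrite R0 I0.
move: (complex.Re s0) (complex.Im s0) (complex.Re s1) (complex.Im s1) (complex.Re s2) (complex.Im s2) k2r k2i k3r
  => u0 v0 u1 v1 u2 v2 k2r k2i k3r.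
have HSU : u0 ^+ 2 + u1 ^+ 2 + u2 ^+ 2 = a0 / 2 * (1 + x ^+ 2 + y ^+ 2) ^+ 2 by clear -k2r k3r; lra.
have HSV : v0 ^+ 2 + v1 ^+ 2 + v2 ^+ 2 = a0 / 2 * (1 + x ^+ 2 + y ^+ 2) ^+ 2 by clear -k2r k3r; lra.
have HSUV : u0 * v0 + u1 * v1 + u2 * v2 = 0 by clear -k2i; lra.
rewrite HSU HSV HSUV.
move: (dX f x y) (dY f x y) (dXX f x y) (dXY f x y) (dYY f x y) => dA dB dC dD dE; clear; lra.
Qed.
End S.

Theorem proposition3p3 (R : realType) (L : 'I_3 -> 'M[R[i]]_2) :
  (forall j, selfadj (L j)) ->
  ((exists c : R, c != 0 /\
      forall (f : R -> R -> R) (x y : R),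
        generator L f x y = c * laplace_beltrami f x y)
   <-> (is_tsa_basis L /\ exists a : R, orth_with L a))
  /\ (forall a : R, is_tsa_basis L -> orth_with L a ->
        forall (f : R -> R -> R) (x y : R),
          generator L f x y = a * laplace_beltrami f x y)
  /\ orth_with (@pauli R) 2.
Proof.
move=> HL; split; [split | split].
- case=> c [hc H]; have [Hb0 Ho0] := forward R L c HL hc H; split; [exact: Hb0 | exists c; exact: Ho0].
- case=> Hb [a Ho]; have [ha Hg] := backward R L a HL Hb Ho; exists a; split; [exact: ha | exact: Hg].
- move=> a Hb Ho; exact: (backward R L a HL Hb Ho).2.
- move=> j k; move: j k; apply: ord3P; apply: ord3P;
    rewrite trE !mulE /pauli !mxE /=; apply: ceq; rewrite /=; lra.
Qed.
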